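(* Let $G=\mathrm{GL}_n(q)$, let $P$ be a parabolic subgroup of $G$ (for instance $P=\mathrm{P}_{n,d}(q)$), and let $x\in G$ have Jordan decomposition $x=su$ ($s$ semisimple, $u$ unipotent, $su=us$). Put $H=C_G(s)$. Let $\mathcal{P}_s=\{gPg^{-1}\mid g\in G,\ s\in gPg^{-1}\}$, on which $H$ acts by conjugation, and let $\mathcal{Q}$ be a set of representatives of the $H$-orbits on $\mathcal{P}_s$. Then for each $P'\in\mathcal{Q}$, $P'\cap H$ is a parabolic subgroup of $H$, and \[ f_P^G(x)=\sum_{P'\in\mathcal{Q}} f^H_{P'\cap H}(u). \]
   Context: For a finite group $G$, a subgroup $Q\le G$ and $x\in G$, $f_Q^G(x)$ denotes the number of $G$-conjugates of $Q$ containing $x$, i.e. $f_Q^G(x)=|\{yQy^{-1}\mid y\in G,\ x\in yQy^{-1}\}|$. Here $C_G(s)$ is the centralizer of $s$ in $G$; it is isomorphic to a direct product of groups $\mathrm{GL}_m(q^l)$, and ''parabolic subgroup of $H$'' means a product of parabolic subgroups of these factors (equivalently, the $\mathbb{F}_q$-points of an $F$-stable parabolic subgroup of $C_{\mathrm{GL}_n(K)}(s)$, $K=\overline{\mathbb{F}_q}$, $F$ the $q$-Frobenius). *)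

(* Defs.v *)
From HB Require Import structures.
From mathcomp Require Import all_boot all_order all_algebra all_fingroup all_field.
Set Implicit Arguments. Unset Strict Implicit. Unset Printing Implicit Defensive.
Import GRing.Theory.

Local Open Scope ring_scope.

Section GLDefs.
Variables (F : finFieldType) (n : nat).

(* G = GL_{n+1}(F); vectors are row vectors, g acts by v |-> v *m g,
   subspaces of F^(n+1) are row spaces of square matrices. *)
Local Notation gT := {'GL_n.+1[F]}.

Definition sub_stab (W : 'M[F]_n.+1) : {set gT} :=
  [set g : gT | (W *m GLval g <= W)%MS].

Definition is_flag (Ws : seq 'M[F]_n.+1) : bool :=
  sorted (fun A B => (A <= B)%MS) Ws.

Definition flag_stab (Ws : seq 'M[F]_n.+1) : {set gT} :=
  \bigcap_(W <- Ws) sub_stab W.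

Definition parabolic (P : {set gT}) : Prop :=
  exists Ws, is_flag Ws /\ P = flag_stab Ws.

(* parabolic subgroups of H = C_G(s) ~ prod_i GL_{m_i}(q^{l_i}): stabilizers in H
   of flags of F[s]-submodules (s-invariant subspaces) of F^(n+1), i.e. products of
   stabilizers of flags of F_{q^{l_i}}-subspaces in the factors. *)
Definition parabolic_centralizer (s : gT) (Q : {set gT}) : Prop :=
  exists Ws, [/\ is_flag Ws, all (fun W => (W *m GLval s <= W)%MS) Ws
               & Q = ('C[s] :&: flag_stab Ws)%g].

(* semisimple: minimal polynomial separable (diagonalizable over F-bar) *)
Definition semisimple (s : gT) : bool := separable_poly (mxminpoly (GLval s)).

Definition unipotent (u : gT) : Prop := exists k : nat, (GLval u - 1) ^+ k = 0.

End GLDefs.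

Definition fcount (gT : finGroupType) (Q G : {set gT}) (x : gT) : nat :=
  #|[set (Q :^ y)%g | y in G & x \in (Q :^ y)%g]|.

(* Main.v *)
Set Warnings "-notation-overridden -ambiguous-paths -deprecated".
Require Import Defs.
From HB Require Import structures.
From mathcomp Require Import all_boot all_order all_algebra all_fingroup all_field all_solvable.
Set Implicit Arguments. Unset Strict Implicit. Unset Printing Implicit Defensive.
Import GRing.Theory.
Section Avg.
Variables (F : finFieldType) (n : nat).
Local Notation gT := {'GL_n.+1[F]}.
Local Notation M := 'M[F]_n.+1.
Variable s : gT.
Local Open Scope ring_scope.

Definition sinv (Y : M) := (Y *m GLval s <= Y)%MS.
Definition eqv (N : M) := GLval s *m N == N *m GLval s.

Lemma GLX (g : gT) i : GLval (g ^+ i)%g = GLval g ^+ i.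
Proof.
elim: i => [|i IH]; first by rewrite expg0 expr0.
by rewrite expgSr exprSr GL_ME IH.
Qed.

Lemma GLV (g : gT) : GLval (g^-1)%g *m GLval g = 1%:M.
Proof. by rewrite -GL_MxE mulVg GL_1E. Qed.

Lemma GLV' (g : gT) : GLval g *m GLval (g^-1)%g = 1%:M.
Proof. by rewrite -GL_MxE mulgV GL_1E. Qed.

Lemma sinv_cyc Y t : sinv Y -> t \in <[s]>%g -> (Y *m GLval t <= Y)%MS.
Proof.
move=> sY /cycleP[i ->]; rewrite GLX; elim: i => [|i IH]; first by rewrite expr0 mulmx1.
by rewrite exprSr -mulmxE mulmxA (submx_trans (submxMr _ IH)).
Qed.

Lemma eqv_cyc C t : eqv C -> t \in <[s]>%g -> GLval t *m C = C *m GLval t.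
Proof.
move=> /eqP sC /cycleP[i ->]; rewrite GLX; elim: i => [|i IH]; first by rewrite expr0 mul1mx mulmx1.
by rewrite exprSr -mulmxE -mulmxA sC mulmxA IH mulmxA.
Qed.

Definition av (A : M) : M :=
  (#[s]%g%:R)^-1 *: \sum_(t in <[s]>%g) (GLval (t^-1)%g *m A *m GLval t).

Lemma av_eqv A : eqv (av A).
Proof.
apply/eqP; rewrite /av -scalemxAl -scalemxAr; congr (_ *: _).
rewrite mulmx_sumr mulmx_suml.
rewrite (reindex_inj (mulIg s)).
apply: eq_big => [t|t _]; first by rewrite groupMr // cycle_id.
rewrite invMg !GL_MxE !mulmxA GLV' mul1mx.
done.
Qed.

Lemma av_sub A Y X : sinv Y -> sinv X -> (Y *m A <= X)%MS -> (Y *m av A <= X)%MS.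
Proof.
move=> sY sX sYA; rewrite /av -scalemxAr scalemx_sub // mulmx_sumr summx_sub // => t tS.
rewrite !mulmxA; apply: submx_trans (sinv_cyc sX tS); apply: submxMr.
apply: submx_trans sYA; apply: submxMr; apply: sinv_cyc => //; by rewrite groupV.
Qed.

Hypothesis ords : (#[s]%g%:R : F) != 0.

Lemma av_id A C Y : sinv Y -> eqv C -> Y *m A *m C = Y -> Y *m av A *m C = Y.
Proof.
move=> sY sC hA; rewrite /av -scalemxAr -scalemxAl mulmx_sumr mulmx_suml.
rewrite (eq_bigr (fun _ => Y)) => [|t tS]; last first.
  rewrite !mulmxA -(mulmxA _ (GLval t)) eqv_cyc // mulmxA.
  have sYt : (Y *m GLval (t^-1)%g <= Y)%MS by apply: sinv_cyc; rewrite // groupV.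
  rewrite -(mulmxKpV sYt) -(mulmxA _ Y A) -(mulmxA _ (Y *m A) C) hA (mulmxKpV sYt).
  by rewrite -mulmxA GLV mulmx1.
rewrite sumr_const -orderE -scaler_nat scalerA mulVf //.
by rewrite scale1r.
Qed.

Lemma eqv1 : eqv 1%:M.
Proof. by rewrite /eqv mulmx1 mul1mx. Qed.

Lemma eqvM A B : eqv A -> eqv B -> eqv (A *m B).
Proof. by move=> /eqP hA /eqP hB; rewrite /eqv mulmxA hA -!mulmxA hB. Qed.

Lemma eqvD A B : eqv A -> eqv B -> eqv (A + B).
Proof. by move=> /eqP hA /eqP hB; rewrite /eqv mulmxDr mulmxDl hA hB. Qed.

Lemma eqv_cent (g : gT) : (g \in 'C[s])%g = eqv (GLval g).
Proof. by rewrite cent1E /eqv -!GL_MxE eq_sym -val_eqE. Qed.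

Lemma mkGL (A B : M) : A *m B = 1%:M -> {g : gT | GLval g = A}.
Proof.
move=> h; have [uA _] := mulmx1_unit h.
by exists (Sub A uA); rewrite SubK.
Qed.

Lemma stab_one (Ws : seq M) (W : M) (k : gT) :
  sinv W -> (forall W', W' \in Ws -> (W <= W')%MS || (W' <= W)%MS) -> (k \in 'C[s])%g ->
  (forall g : gT, (g \in 'C[s])%g -> (forall W', W' \in Ws -> (W' *m GLval g <= W')%MS) ->
      (W *m GLval k *m GLval g <= W *m GLval k)%MS) ->
  (W *m GLval k <= W)%MS.
Proof.
move=> sW chain kC Linv.
have ek : eqv (GLval k) by rewrite -eqv_cent.
pose E0 := proj_mx W (W^C)%MS.
pose E := av E0.
have hE1 : W *m E = W.
  rewrite -[W *m E]mulmx1; apply: av_id => //; first exact: eqv1.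
  by rewrite mulmx1 proj_mx_id ?capmx_compl.
have hE2 : (E <= W)%MS.
  rewrite -[E]mul1mx; apply: av_sub => //; first by rewrite /sinv mul1mx submx1.
  exact: proj_mx_sub.
have eE : eqv E := av_eqv E0.
have hEid : forall m (X : 'M_(m, n.+1)), (X <= W)%MS -> X *m E = X.
  by move=> m X sXW; rewrite -(mulmxKpV sXW) -mulmxA hE1.
have hEE : E *m E = E := hEid _ _ hE2.
pose P := 1%:M - E.
have eP : eqv P by rewrite /eqv /P mulmxBr mulmxBl mulmx1 mul1mx (eqP eE).
have hPE : E *m P = 0 by rewrite /P mulmxBr mulmx1 hEE subrr.
have hWP : forall m (X : 'M_(m, n.+1)), (X <= W)%MS -> X *m P = 0.
  by move=> m X sX; rewrite /P mulmxBr mulmx1 hEid ?subrr.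
pose Z := W *m GLval k.
have sZ : sinv Z.
  by rewrite /sinv /Z -mulmxA -(eqP ek) mulmxA submxMr.
pose Y := Z *m P.
have sY : sinv Y by rewrite /sinv /Y -mulmxA -(eqP eP) mulmxA submxMr.
pose U := (Z :&: W)%MS.
have Linv' : forall N, eqv N -> (Z *m (P *m N *m E) <= U)%MS.
  move=> N eN; set M0 := P *m N *m E.
  have M00 : M0 *m M0 = 0.
    by rewrite /M0 -!mulmxA (mulmxA E P) hPE mul0mx !mulmx0.
  have inv : (1%:M + M0) *m (1%:M - M0) = 1%:M.
    by rewrite mulmxBr !mulmxDl !mul1mx mulmx1 M00 addr0 addrK.
  have [g hg] := mkGL inv.
  have eM0 : eqv M0 by rewrite /M0; apply: eqvM => //; apply: eqvM.
  have gC : (g \in 'C[s])%g by rewrite eqv_cent hg; apply: eqvD => //; apply: eqv1.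
  have gW : forall W', W' \in Ws -> (W' *m GLval g <= W')%MS.
    move=> W' /chain /orP [sWW' | sW'W]; rewrite hg mulmxDr mulmx1 addmx_sub //.
      rewrite /M0 mulmxA; apply: submx_trans (submxMl _ _) _.
      exact: submx_trans hE2 sWW'.
    by rewrite /M0 !mulmxA hWP // !mul0mx sub0mx.
  have := Linv g gC gW; rewrite hg -/Z mulmxDr mulmx1 => h.
  rewrite sub_capmx; apply/andP; split.
    have -> : Z *m M0 = - Z + (Z + Z *m M0) by rewrite addKr.
    by rewrite addmx_sub // eqmx_opp.
  by rewrite /M0 !mulmxA; apply: submx_trans (submxMl _ _) hE2.
pose tr (X : M) : M := (\sum_(N | eqv N && (Y *m N <= X)%MS) (Y *m N))%MS.
have trS : forall X, (tr X <= X)%MS by move=> X; apply/sumsmx_subP => N /andP[].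
have tr_sup : forall X N, eqv N -> (Y *m N <= X)%MS -> (Y *m N <= tr X)%MS.
  by move=> X N eN sN; apply: (sumsmx_sup N) => //; rewrite eN sN.
have h1 : (tr W <= tr U)%MS.
  apply/sumsmx_subP => N /andP[eN sN]; apply: tr_sup => //.
  rewrite -(hEid _ _ sN) /Y; have := Linv' N eN; by rewrite !mulmxA.
have h2 : (\rank (tr Z) <= \rank (tr W))%N.
  have : (tr Z <= tr W *m GLval k)%MS.
    apply/sumsmx_subP => N /andP[eN sN].
    have -> : Y *m N = Y *m (N *m GLval (k^-1)%g) *m GLval k.
      by rewrite -!mulmxA GLV mulmx1.
    apply: submxMr; apply: tr_sup.
      by apply: eqvM => //; rewrite -eqv_cent groupV.
    rewrite mulmxA; apply: submx_trans (submxMr (GLval (k^-1)%g) sN) _.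
    by rewrite /Z -mulmxA GLV' mulmx1.
  move/mxrankS; rewrite mxrankMfree // row_free_unit; exact: (GL_unitmx k).
pose N0 := av (pinvmx Y *m Z).
have eN0 : eqv N0 := av_eqv _.
have hN0 : Y *m N0 *m P = Y.
  apply: av_id => //.
  by rewrite mulmxA -mulmxA -/Y mulmxKpV.
have sN0 : (Y *m N0 <= Z)%MS by apply: av_sub => //; rewrite mulmxA submxMl.
have h3 : (tr U + Y *m N0 <= tr Z)%MS.
  rewrite addsmx_sub; apply/andP; split; last exact: tr_sup.
  apply/sumsmx_subP => N /andP[eN sN]; apply: tr_sup => //.
  exact: submx_trans sN (capmxSl _ _).
pose X := (tr U :&: Y *m N0)%MS.
have hX : X = 0.
  have sX : (X <= Y *m N0)%MS := capmxSr _ _.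
  have sXW : (X <= W)%MS.
    apply: submx_trans (capmxSl _ _) _; apply: submx_trans (trS U) _; exact: capmxSr.
  have := hWP _ _ sXW.
  rewrite -(mulmxKpV sX) -mulmxA hN0 => hD.
  transitivity (X *m pinvmx (Y *m N0) *m (Y *m N0)); first by rewrite mulmxKpV.
  by rewrite mulmxA hD mul0mx.
have := mxrank_sum_cap (tr U) (Y *m N0); rewrite -/X hX mxrank0 addn0 => eqr.
have r0 : \rank (Y *m N0) = 0%N.
  have := mxrankS h3; rewrite eqr => h.
  have := leq_trans h (leq_trans h2 (mxrankS h1)).
  by rewrite -{2}[\rank (tr U)]addn0 leq_add2l leqn0 => /eqP.
move/eqP: r0; rewrite mxrank_eq0 => /eqP YN0.
have Y0 : Y = 0 by rewrite -hN0 YN0 mul0mx.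
have : Z = Z *m E by apply/eqP; rewrite -subr_eq0 -[Z in Z - _]mulmx1 -mulmxBr -/P -/Y Y0.
move=> eZ; rewrite -/Z eZ; exact: submx_trans (submxMl _ _) hE2.
Qed.

End Avg.

Section Flags.
Variables (F : finFieldType) (n : nat).
Local Notation gT := {'GL_n.+1[F]}.
Local Notation M := 'M[F]_n.+1.
Local Open Scope ring_scope.

Lemma flag_stabP (Ws : seq M) (g : gT) :
  (g \in flag_stab Ws) = all (fun W => (W *m GLval g <= W)%MS) Ws.
Proof.
rewrite /flag_stab; elim: Ws => [|W Ws IH]; first by rewrite big_nil inE.
by rewrite big_cons in_setI IH /sub_stab inE.
Qed.

Lemma flag_group (Ws : seq M) : group_set (flag_stab Ws).
Proof.
apply/group_setP; split.
  by rewrite flag_stabP; apply/allP => W _; rewrite GL_1E mulmx1.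
move=> g h; rewrite !flag_stabP => /allP hg /allP hh; apply/allP => W WW.
rewrite GL_MxE mulmxA; apply: submx_trans (submxMr _ (hg W WW)) (hh W WW).
Qed.

Lemma GLfree (g : gT) : row_free (GLval g).
Proof. by rewrite row_free_unit; exact: (GL_unitmx g). Qed.

Lemma flag_conj (Ws : seq M) (g : gT) :
  (flag_stab Ws :^ g)%g = flag_stab [seq W *m GLval g | W <- Ws].
Proof.
apply/setP => y; rewrite mem_conjg !flag_stabP all_map; apply: eq_all => W.
rewrite -(submxMfree _ _ (GLfree g)) conjgE invgK !GL_MxE !mulmxA.
by rewrite -(mulmxA _ (GLval (g^-1)%g)) GLV mulmx1.
Qed.

Lemma flag_map (Ws : seq M) (g : gT) : is_flag Ws -> is_flag [seq W *m GLval g | W <- Ws].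
Proof.
rewrite /is_flag; elim: Ws => [|W Ws IH] //= hp.
case: Ws IH hp => [|W' Ws] IH //= /andP[h1 h2].
rewrite submxMr //=; exact: IH.
Qed.

Lemma flag_chain (Ws : seq M) W1 W2 : is_flag Ws -> W1 \in Ws -> W2 \in Ws ->
  (W1 <= W2)%MS || (W2 <= W1)%MS.
Proof.
have tr : transitive (fun A B : M => (A <= B)%MS).
  by move=> B A C; apply: submx_trans.
rewrite /is_flag; elim: Ws => [|W Ws IH] //= hp.
have hs := path_sorted hp; have /allP hm := order_path_min tr hp.
rewrite !inE => /orP[/eqP-> | h1] /orP[/eqP-> | h2].
- by rewrite submx_refl.
- by rewrite hm.
- by rewrite hm ?orbT.
- exact: IH.
Qed.

Lemma key (s : gT) (Ws : seq M) (k : gT) :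
  (#[s]%g%:R : F) != 0 ->
  is_flag Ws -> all (sinv s) Ws -> (k \in 'C[s])%g ->
  (('C[s] :&: flag_stab Ws) :^ k)%g = ('C[s] :&: flag_stab Ws)%g -> k \in flag_stab Ws.
Proof.
move=> ords fW /allP sW kC hL; rewrite flag_stabP; apply/allP => W WW.
apply: (stab_one ords (Ws := Ws)) => //; first exact: sW.
  by move=> W' W'W; apply: (flag_chain fW).
move=> g gC gW.
have : g \in ('C[s] :&: flag_stab Ws)%g by rewrite in_setI gC flag_stabP; apply/allP.
rewrite -hL mem_conjg in_setI flag_stabP => /andP[_ /allP /(_ W WW)].
rewrite conjgE invgK !GL_MxE !mulmxA => h.
have := submxMr (GLval k) h; rewrite -!mulmxA GLV mulmx1 !mulmxA; exact.
Qed.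

End Flags.

Section Jordan.
Variables (F : finFieldType) (n : nat).
Local Notation gT := {'GL_n.+1[F]}.
Local Notation M := 'M[F]_n.+1.
Local Open Scope ring_scope.

Lemma sqf (p q : {poly F}) e : separable_poly p -> p %| q ^+ e -> p %| q.
Proof.
move=> sp pq.
pose g := gcdp p q; pose d := p %/ g.
have pdg : p = d * g by rewrite /d divpK // dvdp_gcdl.
have dp : d %| p by rewrite {1}pdg dvdp_mulIl.
have cdq : coprimep d q.
  pose e' := gcdp d q.
  have e'g : e' %| g by rewrite dvdp_gcd (dvdp_trans (dvdp_gcdl _ _) dp) dvdp_gcdr.
  have : e' * e' %| p by rewrite pdg dvdp_mul // dvdp_gcdl.
  move/(separable_coprime sp); rewrite coprimepp => h.
  by rewrite coprimep_def.
have cdqe : coprimep d (q ^+ e) by apply: coprimep_expr.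
have : coprimep d d.
  apply: (coprimep_dvdr (dvdp_trans dp pq)).
  by rewrite coprimep_sym.
rewrite coprimepp -dvdp1 => d1.
rewrite pdg -[q]mul1r; apply: dvdp_mul => //; exact: dvdp_gcdr.
Qed.

Variable p : nat.
Hypothesis pp : prime p.
Hypothesis pF : p \in [pchar F].

Local Notation PF := {poly F}.

Lemma pcharP : p \in [pchar PF].
Proof.
rewrite inE pp /=; have := pF; rewrite inE => /andP[_ /eqP h]; apply/eqP.
by rewrite -(rmorph_nat (@polyC F)) h.
Qed.

Lemma pnat_pchar k : ([pchar PF]).-nat (p ^ k)%N.
Proof. by rewrite (eq_pnat _ (pcharf_eq pcharP)) pnatX pnat_id. Qed.

Lemma hornerX (A : M) m : horner_mx A ('X^m) = A ^+ m.
Proof. by rewrite rmorphXn /= horner_mx_X. Qed.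

Lemma unip_pelt (u : gT) : unipotent u -> (p.-elt u)%g.
Proof.
case=> k hk.
have h : GLval (u ^+ (p ^ k)%N)%g = 1.
  have e : ('X^(p ^ k)%N : PF) = ('X - 1) ^+ (p ^ k)%N + 1.
    by rewrite -{1}[('X : PF)](subrK 1) exprDn_pchar ?pnat_pchar // expr1n.
  rewrite GLX -hornerX e rmorphD rmorphXn rmorphB /= horner_mx_X rmorph1.
  have lek : (k <= p ^ k)%N by apply: ltnW; apply: ltn_expl; exact: prime_gt1.
  by rewrite -(subnK lek) exprD hk mulr0 add0r.
have : (u ^+ (p ^ k)%N == 1)%g by apply/eqP; apply: val_inj; exact: h.
rewrite -order_dvdn => hd; apply: pnat_dvd hd _.
by rewrite pnatX pnat_id.
Qed.

Lemma ss_p'elt (s : gT) : semisimple s -> (p^'.-elt s)%g.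
Proof.
move=> ss; apply/constt1P.
have [m hm] : exists m, (s.`_p = s ^+ m)%g by apply/cycleP; exact: cycle_constt.
have [a ha] := p_natP (p_elt_constt p s).
have h1 : GLval s ^+ (m * p ^ a)%N = 1.
  by rewrite -GLX expgM -hm -ha expg_order.
pose q : PF := 'X^m - 1.
have hq : horner_mx (GLval s) q = GLval s ^+ m - 1.
  by rewrite rmorphB /= hornerX rmorph1.
have : horner_mx (GLval s) (q ^+ (p ^ a)%N) = 0.
  rewrite /q exprDn_pchar ?pnat_pchar // exprNn_pchar ?pnat_pchar // expr1n -exprM.
  by rewrite rmorphB /= hornerX h1 rmorph1 subrr.
move/mxminpoly_min/(sqf ss)/mxminpoly_minP; rewrite hq => /eqP; rewrite subr_eq0 => /eqP h.
have e : GLval (s.`_p)%g = GLval (1 : gT) by rewrite hm GLX h.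
by apply: val_inj; exact: e.
Qed.

End Jordan.

Lemma flag_conj_id (F : finFieldType) (n : nat) (Ws : seq 'M[F]_n.+1) (k : {'GL_n.+1[F]}) :
  k \in flag_stab Ws -> (flag_stab Ws :^ k)%g = flag_stab Ws.
Proof. by move=> hk; have := @conjGid _ (Group (flag_group Ws)) k hk. Qed.


Unset Implicit Arguments.
Local Open Scope group_scope.

Theorem mainTheorem2 (F : finFieldType) (n : nat) (P : {set {'GL_n.+1[F]}})
    (x s u : {'GL_n.+1[F]}) (Qs : {set {set {'GL_n.+1[F]}}}) :
  parabolic P ->
  x = s * u -> commute s u -> semisimple s -> unipotent u ->
  let H := 'C[s] in
  let Ps := [set P :^ g | g in [set: {'GL_n.+1[F]}] & s \in P :^ g] in
  (* Qs is a set of representatives of the H-orbits (by conjugation) on Ps *)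
  Qs \subset Ps ->
  (forall Q, Q \in Ps -> exists2 R, R \in Qs & exists2 h, h \in H & Q = R :^ h) ->
  (forall R1 R2, R1 \in Qs -> R2 \in Qs ->
     (exists2 h, h \in H & R2 = R1 :^ h) -> R1 = R2) ->
  (forall P', P' \in Qs -> parabolic_centralizer s (P' :&: H)) /\
  fcount P [set: {'GL_n.+1[F]}] x = (\sum_(P' in Qs) fcount (P' :&: H) H u)%N.
Proof.
case=> Ws [fW eP] xsu csu ss un H Ps sQ cover uniqQ.
subst P.
have [p pp pF] := finPcharP F.
have s'p := ss_p'elt pp pF ss.
have up := unip_pelt pp pF un.
have ords : ((#[s]%:R)%R : F) != 0%R.
  by rewrite natf_neq0_pchar (eq_pnat _ (eq_negn (pcharf_eq pF))).
have uH : u \in H by apply/cent1P; exact: (esym csu).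
have hu : x.`_p = u.
  have e : s.`_p = 1 by apply/constt1P.
  by rewrite xsu consttM // e mul1g constt_p_elt.
have hs : x.`_p^' = s.
  rewrite xsu consttM // (constt_p_elt s'p).
  have : (p^'^').-elt u by rewrite /p_elt (eq_pnat _ (negnK p)).
  by move/constt1P ->; rewrite mulg1.
have memx : forall Ws0 : seq 'M[F]_n.+1,
    (x \in flag_stab Ws0) = (s \in flag_stab Ws0) && (u \in flag_stab Ws0).
  move=> Ws0; pose G := Group (flag_group Ws0).
  have -> : flag_stab Ws0 = G by [].
  apply/idP/andP => [xG | [sG uG]]; last by rewrite xsu groupM.
  rewrite -hs -hu; split.
    by have /cycleP[i ->] := cycle_constt p^' x; exact: groupX.
  by have /cycleP[i ->] := cycle_constt p x; exact: groupX.
have PsP : forall R, R \in Ps ->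
    exists Ws', [/\ is_flag Ws', all (sinv s) Ws' & R = flag_stab Ws'].
  move=> R /imsetP[g]; rewrite inE => /andP[_ hg] ->.
  exists [seq (W *m GLval g)%R | W <- Ws]; split; [exact: flag_map | | exact: flag_conj].
  by move: hg; rewrite flag_conj flag_stabP.
split.
  move=> P' /(subsetP sQ) /PsP [Ws' [fW' sW' ->]]; exists Ws'; split => //.
  by rewrite setIC.
have fixs : forall h, h \in H -> s ^ h = s.
  by move=> h /cent1P hC; rewrite conjgE -hC mulKg.
pose orb R := [set R :^ h | h in H].
have orbPs : forall R, R \in Ps -> forall Q, Q \in orb R -> Q \in Ps.
  move=> R /imsetP[g]; rewrite inE => /andP[_ hg] -> Q /imsetP[h hH ->].
  apply/imsetP; exists (g * h); last by rewrite conjsgM.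
  by rewrite inE in_setT /= conjsgM -(fixs h hH) memJ_conjg.
have orb_uniq : forall R1 R2 Q, R1 \in Qs -> R2 \in Qs -> Q \in orb R1 -> Q \in orb R2 -> R1 = R2.
  move=> R1 R2 Q h1 h2 /imsetP[a aH ->] /imsetP[b bH e]; apply: uniqQ => //.
  exists (a * b^-1); first by rewrite groupM ?groupV.
  by rewrite conjsgM e conjsgK.
have hS : fcount (flag_stab Ws) [set: {'GL_n.+1[F]}] x = #|[set Q in Ps | u \in Q]|.
  rewrite /fcount; apply: eq_card => Q; rewrite [in RHS]inE.
  apply/imsetP/andP => [[y] | [/imsetP[g hg eQ] uQ]].
    rewrite inE in_setT /= => hy ->; move: hy; rewrite flag_conj memx -!flag_conj => /andP[h1 h2].
    split => //; apply/imsetP; exists y => //; by rewrite inE in_setT.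
  exists g => //; move: hg; rewrite !inE /= => hg.
  by move: hg uQ; rewrite eQ flag_conj memx => -> ->.
have hsum : #|[set Q in Ps | u \in Q]| = (\sum_(R in Qs) #|[set Q in orb R | u \in Q]|)%N.
  have e : forall R, R \in Qs -> #|[set Q in orb R | u \in Q]| =
      (\sum_(Q in [set Q in Ps | u \in Q]) (Q \in orb R))%N.
    move=> R RQ; rewrite -sum1_card big_mkcond [RHS]big_mkcond /=; apply: eq_bigr => Q _.
    rewrite !inE; case: (boolP (Q \in orb R)) => hQ /=; last by case: (_ && _).
    by rewrite (orbPs R (subsetP sQ R RQ) Q hQ).
  rewrite (eq_bigr _ e) exchange_big /= -sum1_card; apply: eq_bigr => Q.
  rewrite inE => /andP[QPs _].
  have [R0 R0Q [h0 h0H eQ]] := cover Q QPs.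
  have QR0 : Q \in orb R0 by rewrite eQ; apply: imset_f.
  rewrite (bigD1 R0) //= QR0 big1 // => R /andP[RQ neR].
  by case: (boolP (Q \in orb R)) => // QR; rewrite (orb_uniq R R0 Q) ?eqxx in neR.
have hterm : forall R, R \in Qs -> #|[set Q in orb R | u \in Q]| = fcount (R :&: H) H u.
  move=> R RQ; have RPs := subsetP sQ R RQ.
  have [Ws' [fW' sW' eR]] := PsP R RPs.
  pose D := [set h in H | u \in R :^ h].
  have e1 : [set Q in orb R | u \in Q] = [set R :^ h | h in D].
    apply/setP => Q; rewrite inE; apply/andP/imsetP => [[/imsetP[h hH ->] uQ] | [h]].
      by exists h => //; rewrite inE hH.
    by rewrite inE => /andP[hH uQ] ->; split => //; apply: imset_f.
  have hRH : forall h, h \in H -> (R :&: H) :^ h = R :^ h :&: H.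
    by move=> h hH; rewrite conjIg (conjGid hH).
  have e2 : [set (R :&: H) :^ h | h in H & u \in (R :&: H) :^ h] =
            (fun Q => Q :&: H) @: [set R :^ h | h in D].
    rewrite -imset_comp.
    have -> : [set h in H | u \in (R :&: H) :^ h] = D.
      apply/setP => h; rewrite in_set [in RHS]in_set; case: (boolP (h \in H)) => //= hH.
      by rewrite hRH // in_setI uH andbT.
    by apply: eq_in_imset => h; rewrite inE => /andP[hH _] /=; rewrite hRH.
  rewrite /fcount e1 e2; apply: esym; apply: card_in_imset.
  move=> Q1 Q2 /imsetP[a ha ->] /imsetP[b hb ->] /= e.
  move: ha hb; rewrite in_set [in X in _ -> X]in_set => /andP[aH _] /andP[bH _].
  have e' : (R :&: H) :^ (a * b^-1) = R :&: H.
    by rewrite conjsgM hRH // e -hRH // conjsgK.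
  have kC : a * b^-1 \in 'C[s] by rewrite groupM ?groupV.
  have hk : a * b^-1 \in flag_stab Ws'.
    move: (@key F n s Ws' (a * b^-1) ords fW' sW') => hkey.
    have kC' : a * b^-1 \in 'C[s] by rewrite groupM ?groupV.
    move: {hkey}(hkey kC') => hkey.
    apply: hkey; rewrite setIC -eR; exact: e'.
  have eRk := flag_conj_id hk; rewrite -eR in eRk.
  by rewrite -[in RHS]eRk -conjsgM mulgKV.
by rewrite hS hsum; apply: eq_bigr => R RQ; exact: hterm.
Qed.
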